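(* Let $m>1$. There is $D_0>0$ and $C>0$ such that for every real $\widehat d\ge D_0$ and all continuous $2\pi$-periodic functions $\phi,\varphi$ on $\mathbb{R}$ with $\int_0^{2\pi}\varphi=0$, the system $$\begin{cases}-(m+1)f+(f''-g')+\widehat d(f+g')=\phi & \text{on }(0,2\pi),\\ g+(f'-g)-\widehat d(f'+g'')=\varphi&\text{on }(0,2\pi),\\ f(0)=f(2\pi),\ f'(0)=f'(2\pi),\ g(0)=g(2\pi),\ g'(0)=g'(2\pi)\end{cases}$$ has a unique solution $(f,g)\in C^2([0,2\pi])^2$ with $\int_0^{2\pi}g=0$, and $$\|f\|_{C^2([0,2\pi])}+\|g\|_{C^2([0,2\pi])}\le C\big(\|\phi\|_{C^0([0,2\pi])}+\|\varphi\|_{C^0([0,2\pi])}\big).$$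
   Context: In the paper $\widehat d=-\frac{\Psi'(d)}{\Psi(d)}d$ where $d\sim m\ln K\to\infty$, so ''$\widehat d$ large'' corresponds to ''$K$ sufficiently large''; the constant $C$ does not depend on $\widehat d$. *)

(* Defs.v *)
From Stdlib Require Import Reals Lra ClassicalEpsilon.
Open Scope R_scope.

Definition periodic2pi (h : R -> R) : Prop := forall x, h (x + 2 * PI) = h x.

Definition cont_on_cc (h : R -> R) (a b : R) : Prop :=
  forall x, a <= x <= b -> limit1_in h (fun y => a <= y <= b) (h x) x.

(* f is in C^2([a,b]) with first derivative f1 and second derivative f2:
   f is twice differentiable on (a,b), and f, f', f'' extend continuously
   to [a,b] (the extensions being f, f1, f2 restricted to [a,b]). *)
Definition C2_on (f f1 f2 : R -> R) (a b : R) : Prop :=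
  cont_on_cc f a b /\ cont_on_cc f1 a b /\ cont_on_cc f2 a b /\
  (forall x, a < x < b -> derivable_pt_lim f x (f1 x) /\ derivable_pt_lim f1 x (f2 x)).

(* sup norm on [a,b]: the least upper bound of |h| on [a,b] (chosen by epsilon;
   it is the genuine supremum whenever h is continuous on [a,b]) *)
Definition sup_abs (h : R -> R) (a b : R) : R :=
  epsilon (inhabits 0)
    (fun M => is_lub (fun y => exists x, a <= x <= b /\ y = Rabs (h x)) M).

Definition C0_norm (h : R -> R) (a b : R) : R := sup_abs h a b.

Definition C2_norm (f f1 f2 : R -> R) (a b : R) : R :=
  sup_abs f a b + sup_abs f1 a b + sup_abs f2 a b.

(* the boundary value problem of Lemma A.3, with f' = f1, f'' = f2, g' = g1, g'' = g2 *)
Definition solves (m d : R) (phi varphi f f1 f2 g g1 g2 : R -> R) : Prop :=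
  C2_on f f1 f2 0 (2 * PI) /\ C2_on g g1 g2 0 (2 * PI) /\
  (forall x, 0 < x < 2 * PI ->
     - (m + 1) * f x + (f2 x - g1 x) + d * (f x + g1 x) = phi x /\
     g x + (f1 x - g x) - d * (f1 x + g2 x) = varphi x) /\
  f 0 = f (2 * PI) /\ f1 0 = f1 (2 * PI) /\ g 0 = g (2 * PI) /\ g1 0 = g1 (2 * PI) /\
  (exists pr : Riemann_integrable g 0 (2 * PI), RiemannInt pr = 0).

(* Main.v *)
From Coquelicot Require Import Coquelicot.
Require Import Defs.
From Stdlib Require Import Reals Lra ClassicalEpsilon.
Open Scope R_scope.

Lemma D_plus (f g : R -> R) x a b : is_derive f x a -> is_derive g x b ->
  is_derive (fun t => f t + g t) x (a + b).
Proof. intros; apply (is_derive_plus f g x a b); auto. Qed.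

Lemma D_minus (f g : R -> R) x a b : is_derive f x a -> is_derive g x b ->
  is_derive (fun t => f t - g t) x (a - b).
Proof. intros; apply (is_derive_minus f g x a b); auto. Qed.

Lemma D_mult (f g : R -> R) x a b : is_derive f x a -> is_derive g x b ->
  is_derive (fun t => f t * g t) x (a * g x + f x * b).
Proof. intros; apply (is_derive_mult f g x a b); auto. intros; apply Rmult_comm. Qed.

Lemma D_scal (f : R -> R) k x a : is_derive f x a -> is_derive (fun t => k * f t) x (k * a).
Proof. intros; apply is_derive_scal; auto. Qed.

Lemma D_const (c x : R) : is_derive (fun _ => c) x 0.
Proof. apply (is_derive_const c x). Qed.

Lemma D_val (f : R -> R) (x a b : R) : is_derive f x a -> a = b -> is_derive f x b.
Proof. intros H ->; exact H. Qed.

Lemma D_explin (a x : R) : is_derive (fun t => exp (a * t)) x (a * exp (a * x)).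
Proof. auto_derive; auto; ring. Qed.

Lemma D_cont (f : R -> R) x a : is_derive f x a -> continuous f x.
Proof. intros H; apply (ex_derive_continuous (K:=R_AbsRing) (V:=R_NormedModule) f x); exists a; exact H. Qed.

Lemma cont_to_pt (f : R -> R) x : continuous f x -> continuity_pt f x.
Proof. intros H; apply continuity_pt_filterlim; exact H. Qed.

Lemma pt_to_cont (f : R -> R) x : continuity_pt f x -> continuous f x.
Proof. intros H; apply continuity_pt_filterlim; exact H. Qed.

Lemma cont_cc (h : R -> R) a b : (forall x, continuous h x) -> cont_on_cc h a b.
Proof.
  intros H x _. intros eps Heps.
  destruct (cont_to_pt h x (H x) eps Heps) as [alp [Ha Hc]].
  exists alp; split; auto. intros y [Hy Hd].
  destruct (Req_dec y x) as [->|Hne].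
  - simpl. unfold R_dist. rewrite Rminus_diag, Rabs_R0; auto.
  - apply Hc. split; auto. split; auto. exact I.
Qed.

Lemma prim_is_derive (h : R -> R) : (forall x, continuous h x) ->
  forall x, is_derive (fun y => RInt h 0 y) x (h x).
Proof.
  intros Hc x. apply (is_derive_RInt h (fun y => RInt h 0 y) 0 x).
  - apply filter_forall. intros y. apply (RInt_correct (V:=R_CompleteNormedModule)). apply ex_RInt_continuous.
    intros; apply Hc.
  - apply Hc.
Qed.

Lemma exRI (h : R -> R) a b : (forall x, continuous h x) -> ex_RInt h a b.
Proof. intros; apply (ex_RInt_continuous (V:=R_CompleteNormedModule)); intros; auto. Qed.

Lemma prim_bound (h : R -> R) M x : (forall x, continuous h x) ->
  (forall t, 0 <= t <= 2 * PI -> Rabs (h t) <= M) -> 0 <= x <= 2 * PI ->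
  Rabs (RInt h 0 x) <= 2 * PI * M.
Proof.
  intros Hc HM Hx.
  assert (HM0 : 0 <= M). { apply Rle_trans with (Rabs (h 0)). apply Rabs_pos. apply HM.
    pose proof PI_RGT_0; lra. }
  eapply Rle_trans. apply abs_RInt_le_const. lra. apply exRI; auto.
  intros t Ht. apply HM. lra.
  apply Rmult_le_compat_r; lra.
Qed.
Definition Jp (mu : R) (r : R -> R) := RInt (fun t => exp (- mu * t) * r t) 0 (2 * PI).
Definition y0p mu r := exp (2 * PI * mu) * Jp mu r / (1 - exp (2 * PI * mu)).
Definition per1 mu r x := exp (mu * x) * (y0p mu r + RInt (fun t => exp (- mu * t) * r t) 0 x).

Lemma cont_expr (mu : R) (r : R -> R) : (forall x, continuous r x) ->
  forall x, continuous (fun t => exp (- mu * t) * r t) x.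
Proof.
  intros Hr x. apply (continuous_mult (fun t => exp (- mu * t)) r x).
  apply (D_cont _ _ _ (D_explin (- mu) x)). apply Hr.
Qed.

Lemma exp_inv1 (a b : R) : exp (a * b) * exp (- a * b) = 1.
Proof. rewrite <- exp_plus. replace (a * b + - a * b) with 0 by ring. apply exp_0. Qed.

Lemma per1_deriv mu r : (forall x, continuous r x) ->
  forall x, is_derive (per1 mu r) x (mu * per1 mu r x + r x).
Proof.
  intros Hr x. unfold per1. eapply D_val.
  apply D_mult. apply D_explin. apply D_plus. apply D_const.
  apply prim_is_derive. apply cont_expr; auto.
  simpl. pose proof (exp_inv1 mu x).
  transitivity (mu * (exp (mu * x) * (y0p mu r + RInt (fun t : R => exp (- mu * t) * r t) 0 x))
     + (exp (mu * x) * exp (- mu * x)) * r x). ring. rewrite H; ring.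
Qed.

Lemma E_ne1 mu : mu <> 0 -> 1 - exp (2 * PI * mu) <> 0.
Proof.
  intros Hmu He. assert (exp (2 * PI * mu) = exp 0) by (rewrite exp_0; lra).
  apply exp_inv in H. pose proof PI_RGT_0. apply Hmu. nra.
Qed.

Lemma per1_per mu r : mu <> 0 -> per1 mu r 0 = per1 mu r (2 * PI).
Proof.
  intros Hmu. pose proof (E_ne1 mu Hmu). unfold per1.
  rewrite RInt_point. unfold zero; simpl. rewrite Rmult_0_r, exp_0.
  unfold y0p. fold (Jp mu r). replace (mu * (2 * PI)) with (2 * PI * mu) by ring. field. auto.
Qed.

Definition Kp L del := exp (2 * PI * L) * (exp (2 * PI * L) * (2 * PI * exp (2 * PI * L)) / del + 2 * PI * exp (2 * PI * L)).



Lemma exp_le_A mu L t : Rabs mu <= L -> 0 <= t <= 2 * PI -> exp (mu * t) <= exp (2 * PI * L).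
Proof.
  intros HL Ht.
  assert (mu * t <= 2 * PI * L).
  { assert (mu * t <= Rabs mu * t). { apply Rmult_le_compat_r. lra. apply Rle_abs. }
    assert (0 <= Rabs mu) by apply Rabs_pos.
    assert (Rabs mu * t <= L * (2 * PI)). { apply Rmult_le_compat; lra. } lra. }
  destruct (Req_dec (mu * t) (2 * PI * L)) as [E|E]. rewrite E; lra.
  left. apply exp_increasing. lra.
Qed.

Lemma per1_bound mu r L del M : (forall x, continuous r x) -> Rabs mu <= L -> 0 < del ->
  del <= Rabs (1 - exp (2 * PI * mu)) ->
  (forall t, 0 <= t <= 2 * PI -> Rabs (r t) <= M) ->
  forall x, 0 <= x <= 2 * PI -> Rabs (per1 mu r x) <= Kp L del * M.
Proof.
  intros Hr HL Hd Hdel HM x Hx. pose proof PI_RGT_0 as Hpi.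
  set (A := exp (2 * PI * L)).
  assert (HM0 : 0 <= M). { apply Rle_trans with (Rabs (r 0)). apply Rabs_pos. apply HM. lra. }
  assert (HA : 0 < A) by apply exp_pos.
  assert (Hb : forall t, 0 <= t <= 2 * PI -> Rabs (exp (- mu * t) * r t) <= A * M).
  { intros t Ht. rewrite Rabs_mult. rewrite (Rabs_pos_eq (exp _)) by (left; apply exp_pos).
    apply Rmult_le_compat. left; apply exp_pos. apply Rabs_pos.
    apply exp_le_A; auto. rewrite Rabs_Ropp; auto. apply HM; auto. }
  assert (HI : forall y, 0 <= y <= 2 * PI ->
     Rabs (RInt (fun t => exp (- mu * t) * r t) 0 y) <= 2 * PI * (A * M)).
  { intros y Hy. apply prim_bound; auto. apply cont_expr; auto. }
  assert (HE : exp (2 * PI * mu) <= A). { replace (2 * PI * mu) with (mu * (2 * PI)) by ring.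
     apply exp_le_A; auto; lra. }
  assert (Hy0 : Rabs (y0p mu r) <= A * (2 * PI * (A * M)) / del).
  { unfold y0p. unfold Rdiv. rewrite !Rabs_mult. rewrite Rabs_inv.
    rewrite (Rabs_pos_eq (exp _)) by (left; apply exp_pos).
    apply Rmult_le_compat. apply Rmult_le_pos. left; apply exp_pos. apply Rabs_pos.
    left; apply Rinv_0_lt_compat; lra.
    apply Rmult_le_compat; try (left; apply exp_pos); try apply Rabs_pos; auto.
    apply HI; lra.
    apply Rinv_le_contravar; lra. }
  unfold per1. rewrite Rabs_mult. rewrite (Rabs_pos_eq (exp _)) by (left; apply exp_pos).
  unfold Kp. fold A.
  replace ((A * (A * (2 * PI * A) / del + 2 * PI * A)) * M) with
     (A * (A * (2 * PI * (A * M)) / del + 2 * PI * (A * M))) by (field; lra).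
  apply Rmult_le_compat. left; apply exp_pos. apply Rabs_pos.
  apply exp_le_A; auto.
  eapply Rle_trans. apply Rabs_triang. apply Rplus_le_compat; auto.
Qed.

Definition hyps (m d : R) (phi varphi : R -> R) :=
  1 < m /\ m + 2 <= d /\ (forall x, continuous phi x) /\ (forall x, continuous varphi x) /\
  RInt varphi 0 (2 * PI) = 0.

Definition lam m d := sqrt (m - 1 + / d).
Definition Vf (varphi : R -> R) x := RInt varphi 0 x.
Definition cst m d (phi varphi : R -> R) :=
  - RInt (Vf varphi) 0 (2 * PI) / (2 * PI) - (d - 1) / (d - m - 1) * RInt phi 0 (2 * PI) / (2 * PI).
Definition Rf m d phi varphi x := phi x + (d - 1) / d * (Vf varphi x + cst m d phi varphi).
Definition qf m d phi varphi := per1 (lam m d) (Rf m d phi varphi).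
Definition ff m d phi varphi := per1 (- lam m d) (qf m d phi varphi).
Definition ff1 m d phi varphi x := - lam m d * ff m d phi varphi x + qf m d phi varphi x.
Definition ff2 m d phi varphi x := lam m d * lam m d * ff m d phi varphi x + Rf m d phi varphi x.
Definition gg1 m d phi varphi x := ((1 - d) * ff m d phi varphi x - Vf varphi x - cst m d phi varphi) / d.
Definition gg2 m d phi varphi x := ((1 - d) * ff1 m d phi varphi x - varphi x) / d.
Definition GG m d phi varphi x := RInt (gg1 m d phi varphi) 0 x.
Definition ee m d phi varphi := - RInt (GG m d phi varphi) 0 (2 * PI) / (2 * PI).
Definition gg m d phi varphi x := GG m d phi varphi x + ee m d phi varphi.

Lemma lam_sq m d : 1 < m -> 1 <= d -> lam m d * lam m d = m - 1 + / d.
Proof. intros. unfold lam. apply sqrt_sqrt. assert (0 < / d) by (apply Rinv_0_lt_compat; lra). lra. Qed.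

Lemma lam_pos m d : 1 < m -> 1 <= d -> 0 < lam m d.
Proof. intros. unfold lam. apply sqrt_lt_R0. assert (0 < / d) by (apply Rinv_0_lt_compat; lra). lra. Qed.



Lemma V_deriv varphi : (forall x, continuous varphi x) -> forall x, is_derive (Vf varphi) x (varphi x).
Proof. intros; apply prim_is_derive; auto. Qed.

Lemma V_cont varphi : (forall x, continuous varphi x) -> forall x, continuous (Vf varphi) x.
Proof. intros H x; eapply D_cont; apply V_deriv; auto. Qed.

Lemma R_cont m d phi varphi : hyps m d phi varphi -> forall x, continuous (Rf m d phi varphi) x.
Proof.
  intros (Hm & Hd & Hp & Hv & Hi) x. unfold Rf.
  apply (continuous_plus phi). auto.
  apply (continuous_scal (fun _ => (d - 1) / d) (fun y => Vf varphi y + cst m d phi varphi)).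
  apply continuous_const.
  apply (continuous_plus (Vf varphi) (fun _ => cst m d phi varphi)). apply V_cont; auto.
  apply continuous_const.
Qed.

Lemma q_deriv m d phi varphi : hyps m d phi varphi -> forall x,
  is_derive (qf m d phi varphi) x (lam m d * qf m d phi varphi x + Rf m d phi varphi x).
Proof. intros H x. apply per1_deriv. apply R_cont; auto. Qed.

Lemma q_cont m d phi varphi : hyps m d phi varphi -> forall x, continuous (qf m d phi varphi) x.
Proof. intros H x. eapply D_cont. apply q_deriv; auto. Qed.

Lemma f_deriv m d phi varphi : hyps m d phi varphi -> forall x,
  is_derive (ff m d phi varphi) x (ff1 m d phi varphi x).
Proof. intros H x. apply per1_deriv. apply q_cont; auto. Qed.

Lemma f_cont m d phi varphi : hyps m d phi varphi -> forall x, continuous (ff m d phi varphi) x.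
Proof. intros H x. eapply D_cont. apply f_deriv; auto. Qed.

Lemma f1_deriv m d phi varphi : hyps m d phi varphi -> forall x,
  is_derive (ff1 m d phi varphi) x (ff2 m d phi varphi x).
Proof.
  intros H x. unfold ff1. eapply D_val. apply D_plus. apply D_scal. apply f_deriv; auto.
  apply q_deriv; auto. unfold ff1, ff2. ring.
Qed.

Lemma f1_cont m d phi varphi : hyps m d phi varphi -> forall x, continuous (ff1 m d phi varphi) x.
Proof. intros H x. eapply D_cont. apply f1_deriv; auto. Qed.

Lemma f2_cont m d phi varphi : hyps m d phi varphi -> forall x, continuous (ff2 m d phi varphi) x.
Proof.
  intros H x. unfold ff2.
  apply (continuous_plus (fun y => lam m d * lam m d * ff m d phi varphi y)).
  apply (continuous_scal (fun _ => lam m d * lam m d) (ff m d phi varphi)).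
  apply continuous_const. apply f_cont; auto. apply R_cont; auto.
Qed.

Lemma g1_deriv m d phi varphi : hyps m d phi varphi -> forall x,
  is_derive (gg1 m d phi varphi) x (gg2 m d phi varphi x).
Proof.
  intros H x. pose proof H as (Hm & Hd & _). unfold gg1. unfold Rdiv.
  eapply D_val.
  apply (D_mult (fun y => (1 - d) * ff m d phi varphi y - Vf varphi y - cst m d phi varphi) (fun _ => / d)).
  apply D_minus. apply D_minus. apply D_scal. apply f_deriv; auto. apply V_deriv. apply H.
  apply D_const. apply D_const.
  unfold gg2. field. lra.
Qed.

Lemma RI_ext (f g : R -> R) a b : (forall x, f x = g x) -> @eq R (RInt f a b) (RInt g a b).
Proof. intros H; apply (RInt_ext (V:=R_CompleteNormedModule)); intros; apply H. Qed.

Lemma RI_plus (f g : R -> R) a b : ex_RInt f a b -> ex_RInt g a b ->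
  @eq R (RInt (fun x => f x + g x) a b) (RInt f a b + RInt g a b).
Proof. intros; apply (RInt_plus (V:=R_CompleteNormedModule) f g); auto. Qed.

Lemma RI_minus (f g : R -> R) a b : ex_RInt f a b -> ex_RInt g a b ->
  @eq R (RInt (fun x => f x - g x) a b) (RInt f a b - RInt g a b).
Proof. intros; apply (RInt_minus (V:=R_CompleteNormedModule) f g); auto. Qed.

Lemma RI_scal (f : R -> R) k a b : ex_RInt f a b ->
  @eq R (RInt (fun x => k * f x) a b) (k * RInt f a b).
Proof. intros; apply (RInt_scal (V:=R_CompleteNormedModule) f); auto. Qed.

Lemma RI_const (c a b : R) : @eq R (RInt (fun _ => c) a b) (c * (b - a)).
Proof. rewrite (RInt_const (V:=R_CompleteNormedModule)). simpl. unfold scal; simpl. unfold mult; simpl. apply Rmult_comm. Qed.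

Lemma RI_divr (f : R -> R) k a b : ex_RInt f a b ->
  @eq R (RInt (fun x => f x / k) a b) (RInt f a b / k).
Proof.
  intros H. rewrite (RI_ext _ (fun x => / k * f x)). rewrite RI_scal; auto. unfold Rdiv; ring.
  intros; unfold Rdiv; ring.
Qed.

Lemma Cplus (f g : R -> R) x : continuous f x -> continuous g x -> continuous (fun y => f y + g y) x.
Proof. intros; apply (continuous_plus f g); auto. Qed.
Lemma Cscal (f : R -> R) k x : continuous f x -> continuous (fun y => k * f y) x.
Proof. intros; apply (continuous_scal (fun _ => k) f). apply continuous_const. auto. Qed.
Lemma Cconst (c x : R) : continuous (fun _ => c) x.
Proof. apply continuous_const. Qed.
Lemma Cminus (f g : R -> R) x : continuous f x -> continuous g x -> continuous (fun y => f y - g y) x.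
Proof. intros; apply (continuous_minus f g); auto. Qed.
Lemma Copp (f : R -> R) x : continuous f x -> continuous (fun y => - f y) x.
Proof. intros; apply (continuous_opp f); auto. Qed.
Ltac cont_tac := repeat first [ solve [eauto] | apply Copp | apply Cconst | apply Cplus | apply Cminus | apply Cscal ].

Lemma eq1 m d phi varphi x : hyps m d phi varphi ->
  - (m + 1) * ff m d phi varphi x + (ff2 m d phi varphi x - gg1 m d phi varphi x)
  + d * (ff m d phi varphi x + gg1 m d phi varphi x) = phi x.
Proof.
  intros H; pose proof H as (Hm & Hd & _). unfold ff2, gg1, Rf. rewrite lam_sq by lra. field. lra.
Qed.

Lemma eq2 m d phi varphi x : hyps m d phi varphi ->
  gg m d phi varphi x + (ff1 m d phi varphi x - gg m d phi varphi x)
  - d * (ff1 m d phi varphi x + gg2 m d phi varphi x) = varphi x.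
Proof.
  intros H; pose proof H as (Hm & Hd & _). unfold gg2. field. lra.
Qed.

Lemma f_per m d phi varphi : hyps m d phi varphi -> ff m d phi varphi 0 = ff m d phi varphi (2 * PI).
Proof. intros H; pose proof H as (Hm & Hd & _). unfold ff; apply per1_per.
  pose proof (lam_pos m d Hm ltac:(lra)). lra. Qed.

Lemma q_per m d phi varphi : hyps m d phi varphi -> qf m d phi varphi 0 = qf m d phi varphi (2 * PI).
Proof. intros H; pose proof H as (Hm & Hd & _). unfold qf; apply per1_per.
  pose proof (lam_pos m d Hm ltac:(lra)). lra. Qed.

Lemma f1_per m d phi varphi : hyps m d phi varphi -> ff1 m d phi varphi 0 = ff1 m d phi varphi (2 * PI).
Proof. intros H. unfold ff1. rewrite f_per, q_per; auto. Qed.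

Lemma V0 varphi : Vf varphi 0 = 0.
Proof. unfold Vf. rewrite RInt_point. reflexivity. Qed.

Lemma g1_per m d phi varphi : hyps m d phi varphi -> gg1 m d phi varphi 0 = gg1 m d phi varphi (2 * PI).
Proof. intros H. pose proof H as (_ & _ & _ & _ & Hi). unfold gg1. rewrite f_per; auto.
  rewrite V0. unfold Vf at 1. rewrite Hi. reflexivity. Qed.

Lemma int_f2 m d phi varphi : hyps m d phi varphi -> RInt (ff2 m d phi varphi) 0 (2 * PI) = 0.
Proof.
  intros H. pose proof (is_RInt_derive (V:=R_CompleteNormedModule) (ff1 m d phi varphi) (ff2 m d phi varphi) 0 (2 * PI)) as Hr.
  apply is_RInt_unique in Hr. rewrite Hr. rewrite <- f1_per; auto. unfold minus, plus, opp; simpl. ring.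
  intros; apply f1_deriv; auto. intros; apply f2_cont; auto.
Qed.


Lemma alg1 m d IP IV IF : 1 < m -> m + 2 <= d ->
  0 = (m - 1 + / d) * IF + (IP + (d - 1) / d * (IV +
      (- IV / (2 * PI) - (d - 1) / (d - m - 1) * IP / (2 * PI)) * (2 * PI - 0))) ->
  ((1 - d) * IF - IV - (- IV / (2 * PI) - (d - 1) / (d - m - 1) * IP / (2 * PI)) * (2 * PI - 0)) / d = 0.
Proof.
  intros Hm Hd E. pose proof PI_RGT_0.
  assert (Hl : 0 < m - 1 + / d). { assert (0 < / d) by (apply Rinv_0_lt_compat; lra). lra. }
  assert (E1 : (m - 1 + / d) * IF = (m - 1 + / d) * (IP / (d - m - 1))).
  { transitivity (- (IP + (d - 1) / d * (IV +
      (- IV / (2 * PI) - (d - 1) / (d - m - 1) * IP / (2 * PI)) * (2 * PI - 0)))). lra.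
    field. repeat split; lra. }
  apply Rmult_eq_reg_l in E1; [|lra]. rewrite E1. field. repeat split; lra.
Qed.

Lemma int_g1 m d phi varphi : hyps m d phi varphi -> RInt (gg1 m d phi varphi) 0 (2 * PI) = 0.
Proof.
  intros H. pose proof H as (Hm & Hd & Hp & Hv & Hi). pose proof PI_RGT_0.
  pose proof (int_f2 m d phi varphi H) as H2.
  assert (HV : forall x, continuous (Vf varphi) x) by (apply V_cont; auto).
  assert (HF : forall x, continuous (ff m d phi varphi) x) by (apply f_cont; auto).
  set (c := cst m d phi varphi) in *.
  assert (IR : RInt (Rf m d phi varphi) 0 (2 * PI) =
     RInt phi 0 (2 * PI) + (d - 1) / d * (RInt (Vf varphi) 0 (2 * PI) + c * (2 * PI - 0))).
  { unfold Rf. fold c. rewrite RI_plus. rewrite RI_scal. rewrite RI_plus. rewrite RI_const. reflexivity.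
    all: apply exRI; intro; cont_tac. }
  assert (I2 : RInt (ff2 m d phi varphi) 0 (2 * PI) =
      lam m d * lam m d * RInt (ff m d phi varphi) 0 (2 * PI) + RInt (Rf m d phi varphi) 0 (2 * PI)).
  { unfold ff2. rewrite RI_plus. rewrite RI_scal. reflexivity.
    all: apply exRI; intro; cont_tac; apply R_cont; auto. }
  unfold gg1. fold c. rewrite RI_divr. rewrite RI_minus. rewrite RI_minus. rewrite RI_scal. rewrite RI_const.
  all: try (apply exRI; intro; cont_tac).
  rewrite lam_sq in I2 by lra. rewrite IR in I2. rewrite H2 in I2.
  revert I2. unfold c, cst.
  generalize (RInt phi 0 (2 * PI)) (RInt (Vf varphi) 0 (2 * PI)) (RInt (ff m d phi varphi) 0 (2 * PI)).
  intros IP IV IF I2. apply (alg1 m d IP IV IF); auto.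
Qed.


Lemma g1_cont m d phi varphi : hyps m d phi varphi -> forall x, continuous (gg1 m d phi varphi) x.
Proof. intros H x. eapply D_cont. apply g1_deriv; auto. Qed.

Lemma Cdiv (f : R -> R) k x : continuous f x -> continuous (fun y => f y / k) x.
Proof. intros Hf. apply (continuous_mult f (fun _ => / k)); auto. apply continuous_const. Qed.

Lemma g2_cont m d phi varphi : hyps m d phi varphi -> forall x, continuous (gg2 m d phi varphi) x.
Proof. intros H x. pose proof H as (_ & _ & Hp & Hv & _). unfold gg2. apply Cdiv. apply Cminus.
  apply Cscal. apply f1_cont; auto. auto. Qed.

Lemma g_deriv m d phi varphi : hyps m d phi varphi -> forall x,
  is_derive (gg m d phi varphi) x (gg1 m d phi varphi x).
Proof. intros H x. unfold gg. eapply D_val. apply D_plus. apply prim_is_derive.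
  apply g1_cont; auto. apply D_const. ring. Qed.

Lemma g_cont m d phi varphi : hyps m d phi varphi -> forall x, continuous (gg m d phi varphi) x.
Proof. intros H x. eapply D_cont. apply g_deriv; auto. Qed.

Lemma GG_cont m d phi varphi : hyps m d phi varphi -> forall x, continuous (GG m d phi varphi) x.
Proof. intros H x. eapply D_cont. apply prim_is_derive. apply g1_cont; auto. Qed.

Lemma g_per m d phi varphi : hyps m d phi varphi -> gg m d phi varphi 0 = gg m d phi varphi (2 * PI).
Proof. intros H. unfold gg, GG. rewrite int_g1; auto. rewrite RInt_point. reflexivity. Qed.

Lemma int_g m d phi varphi : hyps m d phi varphi -> @eq R (RInt (gg m d phi varphi) 0 (2 * PI)) 0.
Proof.
  intros H. pose proof PI_RGT_0. unfold gg. rewrite RI_plus. rewrite RI_const. unfold ee. field. lra.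
  apply exRI; apply GG_cont; auto. apply exRI; intros; apply Cconst.
Qed.

Lemma abs_mul_le k y K B : Rabs k <= K -> Rabs y <= B -> Rabs (k * y) <= K * B.
Proof. intros. rewrite Rabs_mult. apply Rmult_le_compat; auto; apply Rabs_pos. Qed.

Lemma abs_minus_le a b : Rabs (a - b) <= Rabs a + Rabs b.
Proof. unfold Rminus. eapply Rle_trans. apply Rabs_triang. rewrite Rabs_Ropp. lra. Qed.

Lemma abs_div_le a b B : 0 < b -> Rabs a <= B * b -> Rabs (a / b) <= B.
Proof. intros Hb H. unfold Rdiv. rewrite Rabs_mult, Rabs_inv, (Rabs_pos_eq b) by lra.
  apply (Rmult_le_reg_r b); auto. rewrite Rmult_assoc, Rinv_l by lra. lra. Qed.

Definition del m := 2 * PI * ((m - 1) / (m + 1)) / exp (2 * PI * (m + 1)).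
Definition KK m := Kp (m + 1) (del m).

Lemma lam_bounds m d : 1 < m -> 1 <= d -> (m - 1) / (m + 1) <= lam m d <= m + 1.
Proof.
  intros Hm Hd. pose proof (lam_sq m d Hm Hd) as E. pose proof (lam_pos m d Hm Hd) as P.
  assert (Hi : 0 < / d <= 1). { split. apply Rinv_0_lt_compat; lra.
    rewrite <- Rinv_1. apply Rinv_le_contravar; lra. }
  assert (U : lam m d <= m + 1) by nra.
  split; auto. apply (Rmult_le_reg_r (m + 1)). lra. unfold Rdiv. rewrite Rmult_assoc, Rinv_l by lra.
  nra.
Qed.

Lemma del_pos m : 1 < m -> 0 < del m.
Proof. intros. unfold del. pose proof PI_RGT_0. pose proof (exp_pos (2 * PI * (m + 1))).
  apply Rdiv_lt_0_compat; auto. apply Rmult_lt_0_compat. lra. apply Rdiv_lt_0_compat; lra. Qed.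

Lemma del_le m d : 1 < m -> 1 <= d ->
  del m <= Rabs (1 - exp (2 * PI * lam m d)) /\ del m <= Rabs (1 - exp (2 * PI * - lam m d)).
Proof.
  intros Hm Hd. pose proof (lam_bounds m d Hm Hd) as [L1 L2]. pose proof PI_RGT_0.
  set (l := lam m d) in *. set (l0 := (m - 1) / (m + 1)) in *.
  assert (l0 > 0) by (unfold l0; apply Rdiv_lt_0_compat; lra).
  assert (E1 : 1 + 2 * PI * l < exp (2 * PI * l)) by (apply exp_ineq1; nra).
  assert (EE : exp (2 * PI * l) <= exp (2 * PI * (m + 1))).
  { destruct (Req_dec l (m + 1)) as [->|]. lra. left; apply exp_increasing; nra. }
  set (E := exp (2 * PI * (m + 1))) in *.
  assert (HE : 0 < E) by apply exp_pos.
  assert (Hd1 : del m = 2 * PI * l0 / E) by reflexivity.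
  assert (Hd2 : del m * E = 2 * PI * l0) by (rewrite Hd1; field; lra).
  pose proof (del_pos m Hm).
  assert (0 < 2 * PI * l) by (apply Rmult_lt_0_compat; lra).
  split.
  - rewrite Rabs_minus_sym, Rabs_pos_eq by lra.
    assert (1 <= E) by lra. assert (del m <= del m * E) by nra.
    assert (2 * PI * l0 <= 2 * PI * l) by nra. lra.
  - replace (2 * PI * - l) with (- (2 * PI * l)) by ring. rewrite exp_Ropp.
    set (e := exp (2 * PI * l)) in *.
    assert (0 < / e < 1). { split. apply Rinv_0_lt_compat; lra. rewrite <- Rinv_1.
      apply Rinv_lt_contravar; lra. }
    rewrite Rabs_pos_eq by lra.
    assert (Heq : 1 - / e = (e - 1) / e) by (field; lra). rewrite Heq.
    apply (Rmult_le_reg_r e). lra. unfold Rdiv. rewrite Rmult_assoc, Rinv_l, Rmult_1_r by lra.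
    nra.
Qed.

Definition KR m := m + 2 + 4 * PI.
Definition Kq m := KK m * KR m.
Definition Kf m := KK m * Kq m.
Definition Kf1 m := (m + 1) * Kf m + Kq m.
Definition Kf2 m := m * Kf m + KR m.
Definition Kg1 m := Kf m + 4 * PI + m + 1.
Definition Kg2 m := Kf1 m + 1.
Definition Kg m := 4 * PI * Kg1 m.

Lemma KK_pos m : 1 < m -> 0 < KK m.
Proof. intros. unfold KK, Kp. pose proof PI_RGT_0. pose proof (del_pos m H).
  set (A := exp (2 * PI * (m + 1))). assert (0 < A) by apply exp_pos.
  apply Rmult_lt_0_compat; auto. apply Rplus_lt_0_compat. apply Rdiv_lt_0_compat; auto.
  apply Rmult_lt_0_compat; auto. apply Rmult_lt_0_compat; lra. apply Rmult_lt_0_compat; lra. Qed.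

Definition bnds (phi varphi : R -> R) Np Nv :=
  (forall t, 0 <= t <= 2 * PI -> Rabs (phi t) <= Np) /\ (forall t, 0 <= t <= 2 * PI -> Rabs (varphi t) <= Nv).

Lemma bnds_nonneg phi varphi Np Nv : bnds phi varphi Np Nv -> 0 <= Np /\ 0 <= Nv.
Proof. intros [H1 H2]. pose proof PI_RGT_0. split.
  apply Rle_trans with (Rabs (phi 0)); [apply Rabs_pos | apply H1; lra].
  apply Rle_trans with (Rabs (varphi 0)); [apply Rabs_pos | apply H2; lra]. Qed.

Lemma V_bnd m d phi varphi Np Nv : hyps m d phi varphi -> bnds phi varphi Np Nv ->
  forall x, 0 <= x <= 2 * PI -> Rabs (Vf varphi x) <= 2 * PI * Nv.
Proof. intros H [B1 B2] x Hx. apply prim_bound; auto. apply H. Qed.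

Lemma c_bnd m d phi varphi Np Nv : hyps m d phi varphi -> bnds phi varphi Np Nv ->
  Rabs (cst m d phi varphi) <= 2 * PI * Nv + (m + 1) * Np.
Proof.
  intros H B. pose proof H as (Hm & Hd & Hp & Hv & Hi). pose proof PI_RGT_0.
  pose proof (bnds_nonneg _ _ _ _ B) as [N1 N2].
  assert (IV : Rabs (RInt (Vf varphi) 0 (2 * PI)) <= (2 * PI - 0) * (2 * PI * Nv)).
  { apply abs_RInt_le_const. lra. apply exRI; apply V_cont; auto.
    intros; eapply V_bnd; eauto. }
  assert (IP : Rabs (RInt phi 0 (2 * PI)) <= (2 * PI - 0) * Np).
  { apply abs_RInt_le_const. lra. apply exRI; auto. intros; apply B; auto. }
  assert (Hr : Rabs ((d - 1) / (d - m - 1)) <= m + 1).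
  { rewrite Rabs_pos_eq. apply (Rmult_le_reg_r (d - m - 1)). lra. unfold Rdiv.
    rewrite Rmult_assoc, Rinv_l by lra. nra. left; apply Rdiv_lt_0_compat; lra. }
  unfold cst. eapply Rle_trans. apply abs_minus_le. apply Rplus_le_compat.
  - apply abs_div_le. lra. rewrite Rabs_Ropp. nra.
  - apply abs_div_le. lra. eapply Rle_trans. apply abs_mul_le. exact Hr. exact IP. nra.
Qed.


Lemma K_pos m : 1 < m -> 0 < KR m /\ 0 < Kq m /\ 0 < Kf m /\ 0 < Kf1 m /\ 0 < Kf2 m /\ 0 < Kg1 m /\ 0 < Kg2 m /\ 0 < Kg m.
Proof.
  intros Hm. pose proof (KK_pos m Hm). pose proof PI_RGT_0.
  assert (0 < KR m) by (unfold KR; lra).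
  assert (0 < Kq m) by (unfold Kq; apply Rmult_lt_0_compat; auto).
  assert (0 < Kf m) by (unfold Kf; apply Rmult_lt_0_compat; auto).
  assert (0 < Kf1 m) by (unfold Kf1; nra).
  assert (0 < Kf2 m) by (unfold Kf2; nra).
  assert (0 < Kg1 m) by (unfold Kg1; nra).
  assert (0 < Kg2 m) by (unfold Kg2; nra).
  assert (0 < Kg m) by (unfold Kg; nra).
  tauto.
Qed.

Lemma Rf_bnd m d phi varphi Np Nv : hyps m d phi varphi -> bnds phi varphi Np Nv ->
  forall x, 0 <= x <= 2 * PI -> Rabs (Rf m d phi varphi x) <= KR m * (Np + Nv).
Proof.
  intros H B x Hx. pose proof H as (Hm & Hd & _). pose proof PI_RGT_0.
  pose proof (bnds_nonneg _ _ _ _ B) as [N1 N2].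
  pose proof (V_bnd _ _ _ _ _ _ H B x Hx). pose proof (c_bnd _ _ _ _ _ _ H B).
  assert (Hk : Rabs ((d - 1) / d) <= 1).
  { rewrite Rabs_pos_eq. apply (Rmult_le_reg_r d). lra. unfold Rdiv.
    rewrite Rmult_assoc, Rinv_l by lra. lra. left; apply Rdiv_lt_0_compat; lra. }
  unfold Rf. eapply Rle_trans. apply Rabs_triang. eapply Rle_trans. apply Rplus_le_compat.
  apply B; auto. apply abs_mul_le. exact Hk. apply Rabs_triang.
  unfold KR. nra.
Qed.

Lemma lam_abs m d : 1 < m -> 1 <= d -> Rabs (lam m d) <= m + 1 /\ Rabs (- lam m d) <= m + 1.
Proof. intros. pose proof (lam_bounds m d H H0). pose proof (lam_pos m d H H0).
  rewrite Rabs_Ropp, Rabs_pos_eq by lra. lra. Qed.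

Lemma q_bnd m d phi varphi Np Nv : hyps m d phi varphi -> bnds phi varphi Np Nv ->
  forall x, 0 <= x <= 2 * PI -> Rabs (qf m d phi varphi x) <= Kq m * (Np + Nv).
Proof.
  intros H B x Hx. pose proof H as (Hm & Hd & _).
  pose proof (lam_abs m d Hm ltac:(lra)) as [A1 A2]. pose proof (del_le m d Hm ltac:(lra)) as [D1 D2].
  unfold Kq. rewrite Rmult_assoc. unfold qf.
  apply (per1_bound (lam m d) (Rf m d phi varphi) (m + 1) (del m) (KR m * (Np + Nv))); auto.
  apply R_cont; auto. apply del_pos; auto. intros; eapply Rf_bnd; eauto.
Qed.

Lemma f_bnd m d phi varphi Np Nv : hyps m d phi varphi -> bnds phi varphi Np Nv ->
  forall x, 0 <= x <= 2 * PI -> Rabs (ff m d phi varphi x) <= Kf m * (Np + Nv).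
Proof.
  intros H B x Hx. pose proof H as (Hm & Hd & _).
  pose proof (lam_abs m d Hm ltac:(lra)) as [A1 A2]. pose proof (del_le m d Hm ltac:(lra)) as [D1 D2].
  unfold Kf. rewrite Rmult_assoc. unfold ff.
  apply (per1_bound (- lam m d) (qf m d phi varphi) (m + 1) (del m) (Kq m * (Np + Nv))); auto.
  apply q_cont; auto. apply del_pos; auto. intros; eapply q_bnd; eauto.
Qed.

Lemma f1_bnd m d phi varphi Np Nv : hyps m d phi varphi -> bnds phi varphi Np Nv ->
  forall x, 0 <= x <= 2 * PI -> Rabs (ff1 m d phi varphi x) <= Kf1 m * (Np + Nv).
Proof.
  intros H B x Hx. pose proof H as (Hm & Hd & _).
  pose proof (lam_abs m d Hm ltac:(lra)) as [A1 A2].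
  pose proof (f_bnd _ _ _ _ _ _ H B x Hx). pose proof (q_bnd _ _ _ _ _ _ H B x Hx).
  unfold ff1, Kf1. eapply Rle_trans. apply Rabs_triang.
  eapply Rle_trans. apply Rplus_le_compat. apply abs_mul_le. exact A2. eauto. eauto. lra.
Qed.

Lemma f2_bnd m d phi varphi Np Nv : hyps m d phi varphi -> bnds phi varphi Np Nv ->
  forall x, 0 <= x <= 2 * PI -> Rabs (ff2 m d phi varphi x) <= Kf2 m * (Np + Nv).
Proof.
  intros H B x Hx. pose proof H as (Hm & Hd & _).
  assert (Hl : Rabs (lam m d * lam m d) <= m).
  { rewrite lam_sq by lra. assert (Hi : 0 < / d <= 1). { split. apply Rinv_0_lt_compat; lra.
    rewrite <- Rinv_1. apply Rinv_le_contravar; lra. } rewrite Rabs_pos_eq; lra. }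
  pose proof (f_bnd _ _ _ _ _ _ H B x Hx). pose proof (Rf_bnd _ _ _ _ _ _ H B x Hx).
  unfold ff2, Kf2. eapply Rle_trans. apply Rabs_triang.
  eapply Rle_trans. apply Rplus_le_compat. apply abs_mul_le. exact Hl. eauto. eauto. lra.
Qed.

Lemma g1_bnd m d phi varphi Np Nv : hyps m d phi varphi -> bnds phi varphi Np Nv ->
  forall x, 0 <= x <= 2 * PI -> Rabs (gg1 m d phi varphi x) <= Kg1 m * (Np + Nv).
Proof.
  intros H B x Hx. pose proof H as (Hm & Hd & _). pose proof PI_RGT_0.
  pose proof (bnds_nonneg _ _ _ _ B) as [N1 N2]. pose proof (K_pos m Hm) as (_ & _ & Kf0 & _).
  pose proof (f_bnd _ _ _ _ _ _ H B x Hx). pose proof (V_bnd _ _ _ _ _ _ H B x Hx).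
  pose proof (c_bnd _ _ _ _ _ _ H B).
  unfold gg1. apply abs_div_le. lra.
  assert (Rabs ((1 - d) * ff m d phi varphi x) <= (d - 1) * (Kf m * (Np + Nv))).
  { apply abs_mul_le; auto. rewrite Rabs_minus_sym, Rabs_pos_eq; lra. }
  eapply Rle_trans. apply abs_minus_le. eapply Rle_trans. apply Rplus_le_compat_r. apply abs_minus_le.
  unfold Kg1.
  assert (0 <= Kf m * (Np + Nv)) by (apply Rmult_le_pos; lra).
  set (P := (4 * PI + m + 1) * (Np + Nv)).
  assert (P0 : 2 * PI * Nv + (2 * PI * Nv + (m + 1) * Np) <= P) by (unfold P; assert (0 <= PI * Np) by (apply Rmult_le_pos; lra);
     assert (0 <= m * Nv) by (apply Rmult_le_pos; lra); lra).
  assert (0 <= PI * Nv) by (apply Rmult_le_pos; lra).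
  assert (0 <= m * Np) by (apply Rmult_le_pos; lra).
  assert (0 <= P) by lra.
  assert (P <= d * P) by (rewrite <- (Rmult_1_l P) at 1; apply Rmult_le_compat_r; lra).
  replace ((Kf m + 4 * PI + m + 1) * (Np + Nv) * d) with (d * (Kf m * (Np + Nv)) + d * P) by (unfold P; ring).
  assert ((d - 1) * (Kf m * (Np + Nv)) <= d * (Kf m * (Np + Nv))) by nra.
  lra.
Qed.

Lemma g2_bnd m d phi varphi Np Nv : hyps m d phi varphi -> bnds phi varphi Np Nv ->
  forall x, 0 <= x <= 2 * PI -> Rabs (gg2 m d phi varphi x) <= Kg2 m * (Np + Nv).
Proof.
  intros H B x Hx. pose proof H as (Hm & Hd & _). pose proof PI_RGT_0.
  pose proof (bnds_nonneg _ _ _ _ B) as [N1 N2]. pose proof (K_pos m Hm) as (_ & _ & _ & Kf10 & _).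
  pose proof (f1_bnd _ _ _ _ _ _ H B x Hx). pose proof (proj2 B x Hx).
  unfold gg2. apply abs_div_le. lra.
  assert (Rabs ((1 - d) * ff1 m d phi varphi x) <= (d - 1) * (Kf1 m * (Np + Nv))).
  { apply abs_mul_le; auto. rewrite Rabs_minus_sym, Rabs_pos_eq; lra. }
  eapply Rle_trans. apply abs_minus_le.
  unfold Kg2.
  assert (0 <= Kf1 m * (Np + Nv)) by (apply Rmult_le_pos; lra).
  assert (Nv <= d * (Np + Nv)) by nra.
  replace ((Kf1 m + 1) * (Np + Nv) * d) with (d * (Kf1 m * (Np + Nv)) + d * (Np + Nv)) by ring.
  assert ((d - 1) * (Kf1 m * (Np + Nv)) <= d * (Kf1 m * (Np + Nv))) by nra.
  lra.
Qed.

Lemma g_bnd m d phi varphi Np Nv : hyps m d phi varphi -> bnds phi varphi Np Nv ->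
  forall x, 0 <= x <= 2 * PI -> Rabs (gg m d phi varphi x) <= Kg m * (Np + Nv).
Proof.
  intros H B x Hx. pose proof H as (Hm & Hd & _). pose proof PI_RGT_0.
  assert (HG : forall y, 0 <= y <= 2 * PI -> Rabs (GG m d phi varphi y) <= 2 * PI * (Kg1 m * (Np + Nv))).
  { intros y Hy. apply prim_bound; auto. apply g1_cont; auto. intros; eapply g1_bnd; eauto. }
  assert (He : Rabs (ee m d phi varphi) <= 2 * PI * (Kg1 m * (Np + Nv))).
  { unfold ee. apply abs_div_le. lra. rewrite Rabs_Ropp.
    eapply Rle_trans. apply abs_RInt_le_const. lra. apply exRI. apply GG_cont; auto.
    intros; apply HG; auto. lra. }
  unfold gg, Kg. eapply Rle_trans. apply Rabs_triang.
  pose proof (HG x Hx). lra.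
Qed.

Lemma sup_lub h a b B : a <= b -> (forall x, a <= x <= b -> Rabs (h x) <= B) ->
  is_lub (fun y => exists x, a <= x <= b /\ y = Rabs (h x)) (sup_abs h a b).
Proof.
  intros Hab HB. unfold sup_abs. apply epsilon_spec.
  destruct (completeness (fun y => exists x, a <= x <= b /\ y = Rabs (h x))) as [M HM].
  - exists B. intros y [x [Hx ->]]. auto.
  - exists (Rabs (h a)). exists a. split; auto; lra.
  - exists M; auto.
Qed.

Lemma sup_le h a b B : a <= b -> (forall x, a <= x <= b -> Rabs (h x) <= B) -> sup_abs h a b <= B.
Proof.
  intros Hab HB. destruct (sup_lub h a b B Hab HB) as [_ H]. apply H. intros y [x [Hx ->]]. auto.
Qed.

Lemma sup_ge h a b B x : a <= b -> (forall x, a <= x <= b -> Rabs (h x) <= B) -> a <= x <= b ->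
  Rabs (h x) <= sup_abs h a b.
Proof.
  intros Hab HB Hx. destruct (sup_lub h a b B Hab HB) as [H _]. apply H. exists x; auto.
Qed.

Lemma cont_bounded (h : R -> R) a b : a <= b -> continuity h ->
  exists B, forall x, a <= x <= b -> Rabs (h x) <= B.
Proof.
  intros Hab Hc. destruct (continuity_ab_maj (fun x => Rabs (h x)) a b Hab) as [M [HM _]].
  intros c _. apply (continuity_pt_comp h Rabs). apply Hc. apply Rcontinuity_abs.
  exists (Rabs (h M)). auto.
Qed.

Lemma C0_bnd (h : R -> R) : continuity h ->
  forall x, 0 <= x <= 2 * PI -> Rabs (h x) <= C0_norm h 0 (2 * PI).
Proof.
  intros Hc x Hx. pose proof PI_RGT_0.
  destruct (cont_bounded h 0 (2 * PI)) as [B HB]; auto. lra.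
  unfold C0_norm. eapply sup_ge; eauto. lra.
Qed.

Lemma cc_minus f g a b : cont_on_cc f a b -> cont_on_cc g a b -> cont_on_cc (fun x => f x - g x) a b.
Proof. intros Hf Hg x Hx. apply limit_minus; auto. Qed.
Lemma cc_plus f g a b : cont_on_cc f a b -> cont_on_cc g a b -> cont_on_cc (fun x => f x + g x) a b.
Proof. intros Hf Hg x Hx. apply limit_plus; auto. Qed.
Lemma cc_mult f g a b : cont_on_cc f a b -> cont_on_cc g a b -> cont_on_cc (fun x => f x * g x) a b.
Proof. intros Hf Hg x Hx. apply limit_mul; auto. Qed.
Lemma cc_const c a b : cont_on_cc (fun _ => c) a b.
Proof. intros x Hx eps He. exists 1. split. lra. intros y _. simpl. unfold R_dist. rewrite Rminus_diag, Rabs_R0. auto. Qed.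
Lemma cc_scal k f a b : cont_on_cc f a b -> cont_on_cc (fun x => k * f x) a b.
Proof. intros; apply cc_mult; auto. apply cc_const. Qed.

Lemma const_open (h : R -> R) a b : (forall x, a < x < b -> derivable_pt_lim h x 0) ->
  forall x y, a < x < b -> a < y < b -> h x = h y.
Proof.
  intros Hd. assert (K : forall x y, a < x < b -> a < y < b -> x < y -> h x = h y).
  { intros x y Hx Hy Hxy. destruct (MVT_cor2 h (fun _ => 0) x y Hxy) as [c [Hc _]].
    intros c Hc; apply Hd; lra. lra. }
  intros x y Hx Hy. destruct (Rtotal_order x y) as [H|[H|H]].
  apply K; auto. subst; auto. symmetry; apply K; auto.
Qed.

Lemma endpoint (h : R -> R) a b K x : a < b -> cont_on_cc h a b -> (forall y, a < y < b -> h y = K) ->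
  a <= x <= b -> h x = K.
Proof.
  intros Hab Hc HK Hx.
  destruct (Req_dec x a) as [Ea|Na]; [| destruct (Req_dec x b) as [Eb|Nb]]; [ | | apply HK; lra].
  - subst x. apply Rminus_diag_uniq. apply Rabs_eq_0. apply Rle_antisym; [|apply Rabs_pos].
    apply Rnot_lt_le. intros Hp.
    destruct (Hc a Hx _ Hp) as [alp [Ha Hl]].
    set (y := a + Rmin alp (b - a) / 2).
    assert (Hm1 : 0 < Rmin alp (b - a)) by (apply Rmin_pos; lra).
    assert (Hm2 : Rmin alp (b - a) <= alp) by apply Rmin_l.
    assert (Hm3 : Rmin alp (b - a) <= b - a) by apply Rmin_r.
    assert (Hy : a < y < b) by (unfold y; lra).
    specialize (Hl y). simpl in Hl. unfold R_dist in Hl.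
    rewrite HK in Hl by auto.
    assert (Rabs (y - a) < alp) by (rewrite Rabs_pos_eq; unfold y; lra).
    specialize (Hl (conj (conj (Rlt_le _ _ (proj1 Hy)) (Rlt_le _ _ (proj2 Hy))) H)). rewrite Rabs_minus_sym in Hl. lra.
  - subst x. apply Rminus_diag_uniq. apply Rabs_eq_0. apply Rle_antisym; [|apply Rabs_pos].
    apply Rnot_lt_le. intros Hp.
    destruct (Hc b Hx _ Hp) as [alp [Ha Hl]].
    set (y := b - Rmin alp (b - a) / 2).
    assert (Hm1 : 0 < Rmin alp (b - a)) by (apply Rmin_pos; lra).
    assert (Hm2 : Rmin alp (b - a) <= alp) by apply Rmin_l.
    assert (Hm3 : Rmin alp (b - a) <= b - a) by apply Rmin_r.
    assert (Hy : a < y < b) by (unfold y; lra).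
    specialize (Hl y). simpl in Hl. unfold R_dist in Hl.
    rewrite HK in Hl by auto.
    assert (Rabs (y - b) < alp) by (rewrite Rabs_left; unfold y; lra).
    specialize (Hl (conj (conj (Rlt_le _ _ (proj1 Hy)) (Rlt_le _ _ (proj2 Hy))) H)). rewrite Rabs_minus_sym in Hl. lra.
Qed.

Lemma zero_deriv (h : R -> R) a b : a < b -> (forall x, a < x < b -> is_derive h x 0) ->
  cont_on_cc h a b -> forall x, a <= x <= b -> h x = h ((a + b) / 2).
Proof.
  intros Hab Hd Hc x Hx. apply (endpoint h a b); auto.
  intros y Hy. apply (const_open h a b); auto. intros z Hz. apply is_derive_Reals; auto. lra.
Qed.

Lemma D_id (x : R) : is_derive (fun t => t) x 1.
Proof. apply (is_derive_id x). Qed.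

Lemma hom_zero (m d : R) (F F1 F2 G G1 G2 : R -> R) : 1 < m -> m + 2 <= d ->
  cont_on_cc F 0 (2 * PI) -> cont_on_cc F1 0 (2 * PI) -> cont_on_cc G 0 (2 * PI) -> cont_on_cc G1 0 (2 * PI) ->
  (forall x, 0 < x < 2 * PI -> is_derive F x (F1 x) /\ is_derive F1 x (F2 x) /\
     is_derive G x (G1 x) /\ is_derive G1 x (G2 x)) ->
  (forall x, 0 < x < 2 * PI -> - (m + 1) * F x + (F2 x - G1 x) + d * (F x + G1 x) = 0 /\
     G x + (F1 x - G x) - d * (F1 x + G2 x) = 0) ->
  F 0 = F (2 * PI) -> F1 0 = F1 (2 * PI) -> G 0 = G (2 * PI) -> G1 0 = G1 (2 * PI) ->
  RInt G 0 (2 * PI) = 0 ->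
  forall x, 0 <= x <= 2 * PI -> F x = 0 /\ G x = 0.
Proof.
  intros Hm Hd CF CF1 CG CG1 HD HE B1 B2 B3 B4 HI.
  pose proof PI_RGT_0 as Hpi. assert (H2pi : 0 < 2 * PI) by lra.
  set (mid := (0 + 2 * PI) / 2).
  assert (Hmid : 0 <= mid <= 2 * PI) by (unfold mid; lra).
  pose proof (lam_sq m d Hm ltac:(lra)) as Hl2. pose proof (lam_pos m d Hm ltac:(lra)) as Hlp.
  set (l := lam m d) in *.
  assert (Hid : 0 < / d) by (apply Rinv_0_lt_compat; lra).
  assert (Hll : 0 < l * l) by nra.
  set (K1 := (1 - d) * F mid - d * G1 mid).
  assert (S1 : forall x, 0 <= x <= 2 * PI -> (1 - d) * F x - d * G1 x = K1).
  { intros x Hx. apply (zero_deriv (fun x => (1 - d) * F x - d * G1 x) 0 (2 * PI)); auto.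
    - intros y Hy. destruct (HD y Hy) as (d1 & d2 & d3 & d4). eapply D_val.
      apply D_minus; apply D_scal; eauto. destruct (HE y Hy) as [_ e2]. lra.
    - apply cc_minus; apply cc_scal; auto. }
  set (k := (d - 1) * K1 / d).
  assert (S3 : forall x, 0 < x < 2 * PI -> F2 x = l * l * F x + k).
  { intros x Hx. destruct (HE x Hx) as [e1 _].
    assert (E : G1 x = ((1 - d) * F x - K1) / d).
    { rewrite <- (S1 x) by lra. field. lra. }
    assert (F2 x = (m + 1) * F x + G1 x - d * (F x + G1 x)) by lra.
    rewrite H, E, Hl2. unfold k. field. lra. }
  set (U := fun x => F x + k / (l * l)).
  assert (CU : cont_on_cc U 0 (2 * PI)) by (apply cc_plus; auto; apply cc_const).
  assert (SP : forall x, 0 <= x <= 2 * PI -> F1 x - l * U x = 0 /\ F1 x + l * U x = 0).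
  { intros x Hx. split.
    - set (P := fun x => exp (l * x) * (F1 x - l * U x)).
      assert (HP : forall x, 0 <= x <= 2 * PI -> P x = P mid).
      { intros z Hz. apply (zero_deriv P 0 (2 * PI)); auto.
        - intros y Hy. destruct (HD y Hy) as (d1 & d2 & d3 & d4). unfold P. eapply D_val.
          apply D_mult. apply D_explin. apply D_minus. eauto. apply D_scal. unfold U.
          apply D_plus. eauto. apply D_const.
          rewrite (S3 y Hy). unfold U. field. lra.
        - unfold P. apply cc_mult. apply cont_cc. intros y; exact (D_cont _ _ _ (D_explin l y)).
          apply cc_minus; auto. apply cc_scal; auto. }
      assert (P0 : P 0 = P (2 * PI)) by (rewrite (HP 0), (HP (2 * PI)); auto; lra).
      unfold P in P0. unfold U in P0. rewrite <- B1, <- B2 in P0.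
      rewrite Rmult_0_r, exp_0 in P0. fold (U 0) in P0.
      assert (w0 : F1 0 - l * U 0 = 0).
      { pose proof (E_ne1 l ltac:(lra)). replace (l * (2 * PI)) with (2 * PI * l) in P0 by ring.
        apply (Rmult_eq_reg_l (1 - exp (2 * PI * l))); auto. rewrite Rmult_0_r.
        unfold U in *. lra. }
      pose proof (HP x Hx) as Px. rewrite <- (HP 0) in Px by lra. unfold P in Px.
      rewrite Rmult_0_r, exp_0 in Px. fold (U 0) in Px. rewrite w0 in Px.
      pose proof (exp_pos (l * x)). fold (U x) in Px. nra.
    - set (P := fun x => exp (- l * x) * (F1 x + l * U x)).
      assert (HP : forall x, 0 <= x <= 2 * PI -> P x = P mid).
      { intros z Hz. apply (zero_deriv P 0 (2 * PI)); auto.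
        - intros y Hy. destruct (HD y Hy) as (d1 & d2 & d3 & d4). unfold P. eapply D_val.
          apply D_mult. apply D_explin. apply D_plus. eauto. apply D_scal. unfold U.
          apply D_plus. eauto. apply D_const.
          rewrite (S3 y Hy). unfold U. field. lra.
        - unfold P. apply cc_mult. apply cont_cc. intros y; exact (D_cont _ _ _ (D_explin (- l) y)).
          apply cc_plus; auto. apply cc_scal; auto. }
      assert (P0 : P 0 = P (2 * PI)) by (rewrite (HP 0), (HP (2 * PI)); auto; lra).
      unfold P in P0. unfold U in P0. rewrite <- B1, <- B2 in P0.
      rewrite Rmult_0_r, exp_0 in P0. fold (U 0) in P0.
      assert (w0 : F1 0 + l * U 0 = 0).
      { pose proof (E_ne1 (- l) ltac:(lra)). replace (- l * (2 * PI)) with (2 * PI * - l) in P0 by ring.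
        apply (Rmult_eq_reg_l (1 - exp (2 * PI * - l))); auto. rewrite Rmult_0_r.
        unfold U in *. lra. }
      pose proof (HP x Hx) as Px. rewrite <- (HP 0) in Px by lra. unfold P in Px.
      rewrite Rmult_0_r, exp_0 in Px. fold (U 0) in Px. rewrite w0 in Px.
      pose proof (exp_pos (- l * x)). fold (U x) in Px. nra. }
  assert (SF : forall x, 0 <= x <= 2 * PI -> F x = - k / (l * l)).
  { intros x Hx. destruct (SP x Hx) as [a1 a2]. assert (U x = 0) by nra. unfold U in H.
    unfold Rdiv in *. lra. }
  set (gam := ((1 - d) * (- k / (l * l)) - K1) / d).
  assert (SG1 : forall x, 0 <= x <= 2 * PI -> G1 x = gam).
  { intros x Hx. unfold gam. rewrite <- (SF x Hx). rewrite <- (S1 x Hx). field. lra. }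
  set (T := fun x => G x - gam * x).
  assert (HT : forall x, 0 <= x <= 2 * PI -> T x = T mid).
  { intros z Hz. apply (zero_deriv T 0 (2 * PI)); auto.
    - intros y Hy. destruct (HD y Hy) as (d1 & d2 & d3 & d4). unfold T. eapply D_val.
      apply D_minus. eauto. apply D_scal. apply D_id. rewrite SG1 by lra. ring.
    - unfold T. apply cc_minus; auto. apply cc_scal. apply cont_cc. intros; apply continuous_id. }
  assert (Hg0 : gam = 0).
  { assert (T 0 = T (2 * PI)) by (rewrite (HT 0), (HT (2 * PI)); auto; lra).
    unfold T in H. rewrite B3 in H. nra. }
  assert (HK1 : K1 = 0).
  { unfold gam, k in Hg0. rewrite Hl2 in Hg0.
    assert (Heq : ((1 - d) * (- ((d - 1) * K1 / d) / (m - 1 + / d)) - K1) / d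
                  = K1 * (d - 1 - m) / (d * (m - 1) + 1)).
    { field. repeat split; try lra. assert (0 < d * (m - 1)) by nra. lra. }
    rewrite Heq in Hg0. unfold Rdiv in Hg0. apply Rmult_integral in Hg0. destruct Hg0 as [Hg|Hg].
    apply Rmult_integral in Hg. destruct Hg; lra.
    exfalso. assert (0 < d * (m - 1) + 1) by nra. apply Rinv_neq_0_compat in Hg; lra. }
  assert (Hk : k = 0) by (unfold k; rewrite HK1; unfold Rdiv; ring).
  assert (SG : forall x, 0 <= x <= 2 * PI -> G x = G mid).
  { intros x Hx. pose proof (HT x Hx). unfold T in H. rewrite Hg0 in H. lra. }
  assert (Gm : G mid = 0).
  { assert (RInt G 0 (2 * PI) = RInt (fun _ => G mid) 0 (2 * PI)).
    { apply (RInt_ext (V:=R_CompleteNormedModule)). intros y Hy.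
      rewrite Rmin_left, Rmax_right in Hy by lra. apply SG; lra. }
    rewrite HI, RI_const in H. nra. }
  intros x Hx. split. rewrite SF by auto. rewrite Hk. unfold Rdiv; ring.
  rewrite SG by auto. auto.
Qed.

Definition Ctot m := Kf m + Kf1 m + Kf2 m + Kg m + Kg1 m + Kg2 m.

Lemma der_conv (f f' : R -> R) : (forall x, is_derive f x (f' x)) ->
  forall x, 0 < x < 2 * PI -> derivable_pt_lim f x (f' x).
Proof. intros H x _. apply is_derive_Reals. apply H. Qed.

Theorem lemmaA3 (m : R) (hm : 1 < m) :
  exists D0 C : R, 0 < D0 /\ 0 < C /\
  forall (d : R) (phi varphi : R -> R),
    D0 <= d ->
    continuity phi -> continuity varphi ->
    periodic2pi phi -> periodic2pi varphi ->
    (exists pr : Riemann_integrable varphi 0 (2 * PI), RiemannInt pr = 0) ->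
    (exists f f1 f2 g g1 g2 : R -> R,
        solves m d phi varphi f f1 f2 g g1 g2 /\
        C2_norm f f1 f2 0 (2 * PI) + C2_norm g g1 g2 0 (2 * PI)
          <= C * (C0_norm phi 0 (2 * PI) + C0_norm varphi 0 (2 * PI))) /\
    (forall f f1 f2 g g1 g2 f' f1' f2' g' g1' g2' : R -> R,
        solves m d phi varphi f f1 f2 g g1 g2 ->
        solves m d phi varphi f' f1' f2' g' g1' g2' ->
        forall x, 0 <= x <= 2 * PI -> f x = f' x /\ g x = g' x).
Proof.
  pose proof (K_pos m hm) as (P1 & P2 & P3 & P4 & P5 & P6 & P7 & P8).
  exists (m + 2), (Ctot m). split. lra. split. unfold Ctot; lra.
  intros d phi varphi Hd Hpc Hvc _ _ [pr Hpr].
  pose proof PI_RGT_0 as Hpi.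
  assert (H : hyps m d phi varphi).
  { split; auto. split; auto. split. intros; apply pt_to_cont; apply Hpc.
    split. intros; apply pt_to_cont; apply Hvc. rewrite (RInt_Reals _ _ _ pr). auto. }
  split.
  - exists (ff m d phi varphi), (ff1 m d phi varphi), (ff2 m d phi varphi),
      (gg m d phi varphi), (gg1 m d phi varphi), (gg2 m d phi varphi).
    split.
    + unfold solves, C2_on. split; [|split; [|split; [|split; [|split; [|split; [|split]]]]]].
      * split; [apply cont_cc; apply f_cont; auto|].
        split; [apply cont_cc; apply f1_cont; auto|].
        split; [apply cont_cc; apply f2_cont; auto|].
        intros x Hx. split. apply (der_conv (ff m d phi varphi) (ff1 m d phi varphi)); auto.
        intros; apply f_deriv; auto.
        apply (der_conv (ff1 m d phi varphi) (ff2 m d phi varphi)); auto.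
        intros; apply f1_deriv; auto.
      * split; [apply cont_cc; apply g_cont; auto|].
        split; [apply cont_cc; apply g1_cont; auto|].
        split; [apply cont_cc; apply g2_cont; auto|].
        intros x Hx. split. apply (der_conv (gg m d phi varphi) (gg1 m d phi varphi)); auto.
        intros; apply g_deriv; auto.
        apply (der_conv (gg1 m d phi varphi) (gg2 m d phi varphi)); auto.
        intros; apply g1_deriv; auto.
      * intros x Hx. split. apply eq1; auto. apply eq2; auto.
      * apply f_per; auto.
      * apply f1_per; auto.
      * apply g_per; auto.
      * apply g1_per; auto.
      * assert (Hex : ex_RInt (gg m d phi varphi) 0 (2 * PI)) by (apply exRI; apply g_cont; auto).
        exists (ex_RInt_Reals_0 _ _ _ Hex). rewrite <- RInt_Reals. apply int_g; auto.
    + set (Np := C0_norm phi 0 (2 * PI)). set (Nv := C0_norm varphi 0 (2 * PI)).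
      assert (B : bnds phi varphi Np Nv) by (split; apply C0_bnd; auto).
      assert (Hp2 : 0 <= 2 * PI) by lra.
      unfold C2_norm.
      pose proof (sup_le _ _ _ _ Hp2 (f_bnd _ _ _ _ _ _ H B)).
      pose proof (sup_le _ _ _ _ Hp2 (f1_bnd _ _ _ _ _ _ H B)).
      pose proof (sup_le _ _ _ _ Hp2 (f2_bnd _ _ _ _ _ _ H B)).
      pose proof (sup_le _ _ _ _ Hp2 (g_bnd _ _ _ _ _ _ H B)).
      pose proof (sup_le _ _ _ _ Hp2 (g1_bnd _ _ _ _ _ _ H B)).
      pose proof (sup_le _ _ _ _ Hp2 (g2_bnd _ _ _ _ _ _ H B)).
      unfold Ctot. lra.
  - intros f f1 f2 g g1 g2 f' f1' f2' g' g1' g2' S S' x Hx.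
    destruct S as ((c1 & c2 & c3 & dfs) & (c4 & c5 & c6 & dgs) & eqs & b1 & b2 & b3 & b4 & [pg Hpg]).
    destruct S' as ((c1' & c2' & c3' & dfs') & (c4' & c5' & c6' & dgs') & eqs' & b1' & b2' & b3' & b4' & [pg' Hpg']).
    assert (Z := hom_zero m d (fun x => f x - f' x) (fun x => f1 x - f1' x) (fun x => f2 x - f2' x)
      (fun x => g x - g' x) (fun x => g1 x - g1' x) (fun x => g2 x - g2' x) hm Hd).
    destruct (Z (cc_minus _ _ _ _ c1 c1') (cc_minus _ _ _ _ c2 c2') (cc_minus _ _ _ _ c4 c4')
      (cc_minus _ _ _ _ c5 c5')) with x as [Z1 Z2]; auto.
    + intros y Hy. destruct (dfs y Hy) as [e1 e2]. destruct (dfs' y Hy) as [e1' e2'].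
      destruct (dgs y Hy) as [e3 e4]. destruct (dgs' y Hy) as [e3' e4'].
      split; [|split; [|split]]; apply D_minus; apply is_derive_Reals; auto.
    + intros y Hy. destruct (eqs y Hy) as [e1 e2]. destruct (eqs' y Hy) as [e1' e2']. split; lra.
    + rewrite b1, b1'; auto.
    + rewrite b2, b2'; auto.
    + rewrite b3, b3'; auto.
    + rewrite b4, b4'; auto.
    + rewrite RI_minus. rewrite (RInt_Reals _ _ _ pg), (RInt_Reals _ _ _ pg'), Hpg, Hpg'. exact (Rminus_0_r 0).
      apply ex_RInt_Reals_1; auto. apply ex_RInt_Reals_1; auto.
    + split; lra.
Qed.
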